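(* Let $\mathcal P$ be a 2-reflex orthostack made of three bricks with canonical contact rectangles and signature $\sqcup_i\sqcap_j$ for some types $i,j\in\{1,2,3,4\}$. Then $\mathcal P$ is guarded by a single horizontal closed face guard which is neither the topmost nor the bottommost horizontal face of $\mathcal P$ (namely, one of the two horizontal faces bordering the middle brick).
   Context: A 2-reflex orthostack is an orthogonal polyhedron with no reflex edge parallel to the vertical ($z$) axis all of whose horizontal cross-sections are simply connected; it is a stack of bricks $B_t=R_t\times[z_{t-1},z_t]$, $t=1,\dots,k$ (bottom to top), $z_0<\dots<z_k$, each $R_t$ an axis-parallel rectangle, $R_t\ne R_{t+1}$. The contact rectangle between $B_t$ and $B_{t+1}$ is $(R_t\cap R_{t+1})\times\{z_t\}$; it is canonical if one of $R_t,R_{t+1}$ is strictly contained in the other and their set difference is connected. The type of a canonical contact rectangle is the number $i\in\{1,2,3,4\}$ of sides of the smaller rectangle not contained in the boundary of the larger one. The contact is denoted $\sqcup_i$ if $R_t\subsetneq R_{t+1}$ and $\sqcap_i$ if $R_{t+1}\subsetneq R_t$. The signature is the sequence of these symbols for $t=1,\dots,k-1$, read bottom to top. A point $x$ is visible to $y$ if segment $xy$ does not meet the exterior of the polyhedron; a closed face guard is a face including its boundary; it guards the polyhedron if every point is visible from some point of it. A face is horizontal if orthogonal to the $z$-axis. *)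

(* Defs.v *)
From Stdlib Require Import Reals.
Open Scope R_scope.

Definition pt2 := (R * R)%type.
Definition pt3 := (R * R * R)%type.

Record rect := Rect { rx1 : R; rx2 : R; ry1 : R; ry2 : R }.

Definition valid_rect (r : rect) : Prop := rx1 r < rx2 r /\ ry1 r < ry2 r.

Definition in_rect (r : rect) (p : pt2) : Prop :=
  rx1 r <= fst p <= rx2 r /\ ry1 r <= snd p <= ry2 r.

Definition dist2 (p q : pt2) : R :=
  Rmax (Rabs (fst p - fst q)) (Rabs (snd p - snd q)).

Definition open2 (U : pt2 -> Prop) : Prop :=
  forall p, U p -> exists eps, 0 < eps /\ forall q, dist2 p q < eps -> U q.

Definition closure2 (S : pt2 -> Prop) (p : pt2) : Prop :=
  forall eps, 0 < eps -> exists q, S q /\ dist2 p q < eps.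

Definition connected2 (S : pt2 -> Prop) : Prop :=
  ~ exists U V : pt2 -> Prop,
      open2 U /\ open2 V /\
      (forall p, S p -> U p \/ V p) /\
      (exists p, S p /\ U p) /\ (exists p, S p /\ V p) /\
      (forall p, S p -> U p -> V p -> False).

Definition rect_diff (s r : rect) (p : pt2) : Prop := in_rect s p /\ ~ in_rect r p.

Definition rect_strict_sub (r s : rect) : Prop :=
  (forall p, in_rect r p -> in_rect s p) /\ exists p, in_rect s p /\ ~ in_rect r p.

(** Canonical contacts: [sqcup r s] means R_t = r, R_{t+1} = s with r strictly
    inside s and s \ r connected; [sqcap r s] means s strictly inside r and
    r \ s connected. *)
Definition sqcup (r s : rect) : Prop := rect_strict_sub r s /\ connected2 (rect_diff s r).
Definition sqcap (r s : rect) : Prop := rect_strict_sub s r /\ connected2 (rect_diff r s).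

(** Type of a canonical contact: number of sides of the smaller rectangle [r]
    not contained in the boundary of the larger rectangle [s]. *)
Definition side_free (a b : R) : nat := if Req_EM_T a b then 0%nat else 1%nat.
Definition contact_type (r s : rect) : nat :=
  (side_free (rx1 r) (rx1 s) + side_free (rx2 r) (rx2 s)
   + side_free (ry1 r) (ry1 s) + side_free (ry2 r) (ry2 s))%nat.

(** The three-brick stack B_t = R_t x [z_{t-1}, z_t] (t = 1,2,3), as a closed set. *)
Definition in_brick (r : rect) (za zb : R) (p : pt3) : Prop :=
  let '(x, y, z) := p in in_rect r (x, y) /\ za <= z <= zb.

Definition stack3 (R1 R2 R3 : rect) (z0 z1 z2 z3 : R) (p : pt3) : Prop :=
  in_brick R1 z0 z1 p \/ in_brick R2 z1 z2 p \/ in_brick R3 z2 z3 p.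

(** Segments and visibility: x sees y in P iff the segment xy lies in P
    (i.e. does not meet the exterior of the closed polyhedron P). *)
Definition seg_point (x y : pt3) (l : R) : pt3 :=
  let '(x1, x2, x3) := x in let '(y1, y2, y3) := y in
  (x1 + l * (y1 - x1), x2 + l * (y2 - x2), x3 + l * (y3 - x3)).

Definition visible (P : pt3 -> Prop) (x y : pt3) : Prop :=
  forall l, 0 <= l <= 1 -> P (seg_point x y l).

Definition guards (P : pt3 -> Prop) (G : pt3 -> Prop) : Prop :=
  forall p, P p -> exists g, G g /\ visible P g p.

(** The closed horizontal face at height z between consecutive bricks with
    rectangles r (below) and s (above): the closure of (r symmetric-difference s),
    at height z.  For a canonical contact this is a single face. *)
Definition hface (r s : rect) (z : R) (p : pt3) : Prop :=
  let '(x, y, w) := p in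
  closure2 (fun q => rect_diff r s q \/ rect_diff s r q) (x, y) /\ w = z.

(* Main.v *)
Require Import Defs.
From Stdlib Require Import Reals Lra Lia.
Open Scope R_scope.

Lemma conv (a b u v l : R) : a <= u <= b -> a <= v <= b -> 0 <= l <= 1 ->
  a <= u + l * (v - u) <= b.
Proof. intros. nra. Qed.

Lemma seg_in (r : rect) (a b d e l : R) : in_rect r (a, b) -> in_rect r (d, e) ->
  0 <= l <= 1 -> in_rect r (a + l * (d - a), b + l * (e - b)).
Proof. unfold in_rect; simpl; intros [] [] ?; split; apply conv; auto. Qed.

Lemma cl_self (S : pt2 -> Prop) p : S p -> closure2 S p.
Proof.
  intros Hp eps He; exists p; split; auto. unfold dist2.
  rewrite !Rminus_diag, Rabs_R0, Rmax_left; lra.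
Qed.

Lemma cl_mono (S T : pt2 -> Prop) p : closure2 S p -> (forall q, S q -> T q) -> closure2 T p.
Proof. intros H HT eps He; destruct (H eps He) as [q [Hq Hd]]; eauto. Qed.

Lemma dist_lt (u v : pt2) eps : Rabs (fst u - fst v) < eps -> Rabs (snd u - snd v) < eps ->
  dist2 u v < eps.
Proof. intros; unfold dist2; apply Rmax_lub_lt; auto. Qed.

Lemma free_point (r s : rect) : valid_rect r -> (forall p, in_rect r p -> in_rect s p) ->
  (1 <= contact_type r s)%nat -> exists p, in_rect r p /\ closure2 (rect_diff s r) p.
Proof.
  intros [Hx Hy] Hsub Hc.
  assert (C1 := Hsub (rx1 r, ry1 r)). assert (C2 := Hsub (rx2 r, ry2 r)).
  unfold in_rect in C1, C2; simpl in C1, C2.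
  destruct C1 as [[C1a C1b] [C1c C1d]]; try (split; split; lra).
  destruct C2 as [[C2a C2b] [C2c C2d]]; try (split; split; lra).
  unfold contact_type, side_free in Hc.
  destruct (Req_EM_T (rx1 r) (rx1 s)) as [E1|E1].
  2:{ exists (rx1 r, ry1 r); split. split; simpl; lra.
      intros eps He. set (d := Rmin (eps/2) (rx1 r - rx1 s)).
      assert (Hd : 0 < d) by (unfold d; apply Rmin_glb_lt; lra).
      assert (Hd2 : d <= eps/2) by apply Rmin_l.
      assert (Hd3 : d <= rx1 r - rx1 s) by apply Rmin_r.
      exists (rx1 r - d, ry1 r); split.
      - split. split; simpl; lra. intros [[? ?] _]; simpl in *; lra.
      - apply dist_lt; simpl; apply Rabs_def1; lra. }
  destruct (Req_EM_T (rx2 r) (rx2 s)) as [E2|E2].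
  2:{ exists (rx2 r, ry1 r); split. split; simpl; lra.
      intros eps He. set (d := Rmin (eps/2) (rx2 s - rx2 r)).
      assert (Hd : 0 < d) by (unfold d; apply Rmin_glb_lt; lra).
      assert (Hd2 : d <= eps/2) by apply Rmin_l.
      assert (Hd3 : d <= rx2 s - rx2 r) by apply Rmin_r.
      exists (rx2 r + d, ry1 r); split.
      - split. split; simpl; lra. intros [[? ?] _]; simpl in *; lra.
      - apply dist_lt; simpl; apply Rabs_def1; lra. }
  destruct (Req_EM_T (ry1 r) (ry1 s)) as [E3|E3].
  2:{ exists (rx1 r, ry1 r); split. split; simpl; lra.
      intros eps He. set (d := Rmin (eps/2) (ry1 r - ry1 s)).
      assert (Hd : 0 < d) by (unfold d; apply Rmin_glb_lt; lra).
      assert (Hd2 : d <= eps/2) by apply Rmin_l.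
      assert (Hd3 : d <= ry1 r - ry1 s) by apply Rmin_r.
      exists (rx1 r, ry1 r - d); split.
      - split. split; simpl; lra. intros [_ [? ?]]; simpl in *; lra.
      - apply dist_lt; simpl; apply Rabs_def1; lra. }
  destruct (Req_EM_T (ry2 r) (ry2 s)) as [E4|E4].
  2:{ exists (rx1 r, ry2 r); split. split; simpl; lra.
      intros eps He. set (d := Rmin (eps/2) (ry2 s - ry2 r)).
      assert (Hd : 0 < d) by (unfold d; apply Rmin_glb_lt; lra).
      assert (Hd2 : d <= eps/2) by apply Rmin_l.
      assert (Hd3 : d <= ry2 s - ry2 r) by apply Rmin_r.
      exists (rx1 r, ry2 r + d); split.
      - split. split; simpl; lra. intros [_ [? ?]]; simpl in *; lra.
      - apply dist_lt; simpl; apply Rabs_def1; lra. }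
  simpl in Hc; lia.
Qed.

Lemma seg_eq a b c d e f l :
  seg_point (a, b, c) (d, e, f) l = (a + l * (d - a), b + l * (e - b), c + l * (f - c)).
Proof. reflexivity. Qed.

Theorem mainTheorem9 (R1 R2 R3 : rect) (z0 z1 z2 z3 : R) (i j : nat)
  (hR1 : valid_rect R1) (hR2 : valid_rect R2) (hR3 : valid_rect R3)
  (hz01 : z0 < z1) (hz12 : z1 < z2) (hz23 : z2 < z3)
  (hc1 : sqcup R1 R2) (hc2 : sqcap R2 R3)
  (hi : (1 <= i <= 4)%nat) (hj : (1 <= j <= 4)%nat)
  (hti : contact_type R1 R2 = i) (htj : contact_type R3 R2 = j) :
  guards (stack3 R1 R2 R3 z0 z1 z2 z3) (hface R1 R2 z1) \/
  guards (stack3 R1 R2 R3 z0 z1 z2 z3) (hface R2 R3 z2).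
Proof.
  destruct hc1 as [[S12 _] _]. destruct hc2 as [[S32 _] _].
  destruct (free_point R1 R2 hR1 S12 ltac:(lia)) as [[g1x g1y] [G1r G1c]].
  destruct (free_point R3 R2 hR3 S32 ltac:(lia)) as [[h3x h3y] [H3r H3c]].
  assert (F1 : (exists q, in_rect R3 q /\ closure2 (rect_diff R2 R1) q) ->
               guards (stack3 R1 R2 R3 z0 z1 z2 z3) (hface R1 R2 z1)).
  { intros [[qx qy] [Q3 Qc]] [[x y] z] Hp.
    destruct Hp as [[Hr Hz]|[[Hr Hz]|[Hr Hz]]].
    - exists (g1x, g1y, z1); split.
      + split; auto. eapply cl_mono; eauto.
      + intros l hl; rewrite seg_eq; left; split. apply seg_in; auto. nra.
    - exists (g1x, g1y, z1); split.
      + split; auto. eapply cl_mono; eauto.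
      + intros l hl; rewrite seg_eq; right; left; split. apply seg_in; auto. nra.
    - exists (qx, qy, z1); split.
      + split; auto. eapply cl_mono; eauto.
      + intros l hl; rewrite seg_eq.
        destruct (Rle_dec (z1 + l * (z - z1)) z2).
        * right; left; split. apply S32, seg_in; auto. nra.
        * right; right; split. apply seg_in; auto. nra. }
  assert (F2 : (exists q, in_rect R1 q /\ closure2 (rect_diff R2 R3) q) ->
               guards (stack3 R1 R2 R3 z0 z1 z2 z3) (hface R2 R3 z2)).
  { intros [[qx qy] [Q1 Qc]] [[x y] z] Hp.
    destruct Hp as [[Hr Hz]|[[Hr Hz]|[Hr Hz]]].
    - exists (qx, qy, z2); split.
      + split; auto. eapply cl_mono; eauto.
      + intros l hl; rewrite seg_eq.
        destruct (Rle_dec (z2 + l * (z - z2)) z1).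
        * left; split. apply seg_in; auto. nra.
        * right; left; split. apply S12, seg_in; auto. nra.
    - exists (h3x, h3y, z2); split.
      + split; auto. eapply cl_mono; eauto.
      + intros l hl; rewrite seg_eq; right; left; split. apply seg_in; auto. nra.
    - exists (h3x, h3y, z2); split.
      + split; auto. eapply cl_mono; eauto.
      + intros l hl; rewrite seg_eq; right; right; split. apply seg_in; auto. nra. }
  destruct (Classical_Prop.classic (exists q, in_rect R3 q /\ ~ in_rect R1 q)) as [[q [A B]]|N1].
  { left; apply F1; exists q; split; auto. apply cl_self; split; auto. }
  destruct (Classical_Prop.classic (exists q, in_rect R1 q /\ ~ in_rect R3 q)) as [[q [A B]]|N2].
  { right; apply F2; exists q; split; auto. apply cl_self; split; auto. }
  left; apply F1; exists (g1x, g1y); split; auto.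
  destruct (Classical_Prop.classic (in_rect R3 (g1x, g1y))) as [?|C]; auto.
  exfalso; apply N2; eauto.
Qed.
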